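(* Let $\mathfrak{A}_6$ act on $\mathbb{P}^4=\{x_0+\cdots+x_5=0\}\subset\mathbb{P}^5$ by permuting the coordinates $x_0,\ldots,x_5$. Let $X$ be an $\mathfrak{A}_6$-invariant quartic threefold in $\mathbb{P}^4$ that contains an $\mathfrak{A}_6$-orbit of length at most six. Then $X=X_{\frac{7}{10}}$.
   Context: For $t\in\mathbb{C}$, $X_t\subset\mathbb{P}^4=\{x_0+\cdots+x_5=0\}\subset\mathbb{P}^5$ denotes the quartic threefold given by $\sum_{i=0}^5x_i^4=t\big(\sum_{i=0}^5x_i^2\big)^2$. *)

(* Defs.v *)
From HB Require Import structures.
From mathcomp Require Import all_boot all_order all_algebra all_fingroup.
From mathcomp Require Import mpoly.
Set Implicit Arguments. Unset Strict Implicit. Unset Printing Implicit Defensive.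
Import GRing.Theory Num.Theory.
Local Open Scope ring_scope.

(* Vectors of C^6 are functions 'I_6 -> C.  P^4 = {x_0+...+x_5 = 0} in P^5. *)
Definition in_hyp (C : ringType) (x : 'I_6 -> C) : Prop := \sum_(i < 6) x i = 0.

Definition proj_eq (C : ringType) (x y : 'I_6 -> C) : Prop :=
  exists2 l : C, l != 0 & y = (fun i => l * x i).

(* A_6 acting by permuting coordinates: an even permutation s sends the point
   [x] to [x o s^-1]; we index the group elements by s^-1 (also even). *)
Definition permc (C : ringType) (s : 'S_6) (x : 'I_6 -> C) : 'I_6 -> C :=
  fun i => x (s i).

Definition Xt_form (C : ringType) (t : C) (x : 'I_6 -> C) : C :=
  \sum_(i < 6) x i ^+ 4 - t * (\sum_(i < 6) x i ^+ 2) ^+ 2.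

(* Main.v *)
Require Import Defs.
From HB Require Import structures.
From mathcomp Require Import all_boot all_order all_algebra all_fingroup all_solvable.
From mathcomp Require Import mpoly.
From mathcomp Require Import ring lra zify.
From Stdlib Require Import Lia.
Set Implicit Arguments. Unset Strict Implicit. Unset Printing Implicit Defensive.
Import GRing.Theory Num.Theory.
Local Open Scope ring_scope.
Notation i0 := (@Ordinal 6 0 isT).
Notation i1 := (@Ordinal 6 1 isT).
Notation i2 := (@Ordinal 6 2 isT).
Notation i3 := (@Ordinal 6 3 isT).
Notation i4 := (@Ordinal 6 4 isT).
Notation i5 := (@Ordinal 6 5 isT).
Lemma enum6 : enum 'I_6 = [:: i0; i1; i2; i3; i4; i5].
Proof. by apply: (inj_map val_inj); rewrite val_enum_ord. Qed.
Lemma big6 (R : Type) (idx : R) (op : R -> R -> R) (F : 'I_6 -> R) :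
  \big[op/idx]_(i < 6) F i = op (F i0) (op (F i1) (op (F i2) (op (F i3) (op (F i4) (op (F i5) idx))))).
Proof. by rewrite unlock /index_enum /= -enumT enum6. Qed.
Goal ((i1 : 'I_6) == i0) = false. Proof. by []. Qed.
Definition a3 : 'S_6 := (tperm i0 i1 * tperm i0 i2)%g.
Definition b3 : 'S_6 := (tperm i0 i3 * tperm i0 i4)%g.
Lemma ab_ne : (a3 * b3 != b3 * a3)%g.
Proof.
apply/eqP => /permP /(_ i0). rewrite /a3 /b3 !permM !permE /=. done. Qed.
Lemma a3_even : ~~ odd_perm a3.
Proof. by rewrite /a3 odd_permM !odd_tperm. Qed.
Lemma b3_even : ~~ odd_perm b3.
Proof. by rewrite /b3 odd_permM !odd_tperm. Qed.
Section Main.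
Variable C : numClosedFieldType.

Lemma permcM (s t : 'S_6) (x : 'I_6 -> C) : permc s (permc t x) =1 permc (s * t)%g x.
Proof. by move=> i; rewrite /permc permM. Qed.

Lemma sum_perm (s : 'S_6) (f : 'I_6 -> C) : \sum_i f (s i) = \sum_i f i.
Proof. by rewrite [RHS](reindex_inj (@perm_inj _ s)). Qed.

Lemma in_hyp_permc s (x : 'I_6 -> C) : in_hyp x -> in_hyp (permc s x).
Proof. by rewrite /in_hyp /permc sum_perm. Qed.

Lemma partA (F : {mpoly C[6]}) :
  (exists2 x : 'I_6 -> C, in_hyp x & F.@[x] != 0) ->
  (forall s : 'S_6, ~~ odd_perm s -> exists c : C, forall x, in_hyp x -> F.@[permc s x] = c * F.@[x]) ->
  forall s : 'S_6, ~~ odd_perm s -> forall x, in_hyp x -> F.@[permc s x] = F.@[x].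
Proof.
move=> [x1 H1 nz1] Hinv.
pose c s := F.@[permc s x1] / F.@[x1].
have hc : forall s, ~~ odd_perm s -> forall x, in_hyp x -> F.@[permc s x] = c s * F.@[x].
  move=> s es x Hx; have [cs Hcs] := Hinv s es.
  by rewrite Hcs // /c Hcs // mulfK.
have cM : forall s t, ~~ odd_perm s -> ~~ odd_perm t -> c (s * t)%g = c s * c t.
  move=> s t es et; apply: (mulIf nz1).
  rewrite -hc ?odd_permM ?(negbTE es) ?(negbTE et) // -(meval_eq _ (permcM s t x1)).
  rewrite hc //; last by apply: in_hyp_permc.
  by rewrite hc // mulrA.
have c1 : c 1%g = 1.
  rewrite /c (meval_eq _ (_ : permc 1%g x1 =1 x1)) ?divff // => i.
  by rewrite /permc perm1.
have cV : forall s, ~~ odd_perm s -> c s * c (s^-1)%g = 1.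
  by move=> s es; rewrite -cM ?odd_permV // mulgV c1.
pose K := [set p : {perm 'I_6} | ~~ odd_perm p && (c p == 1)].
have gK : group_set K.
  apply/group_setP; split; first by rewrite inE odd_perm1 c1 eqxx.
  move=> s t; rewrite !inE => /andP[es /eqP cs] /andP[et /eqP ct].
  by rewrite odd_permM (negbTE es) (negbTE et) cM // cs ct mulr1 eqxx.
pose KG := Group gK.
have nK : (KG <| 'Alt_('I_6))%g.
  apply/andP; split.
    by apply/subsetP => s; rewrite inE Alt_even => /andP[].
  apply/subsetP => g; rewrite Alt_even => eg; rewrite inE; apply/subsetP => k.
  rewrite mem_conjg !inE odd_permJ => /andP[ek ck]; rewrite ek /=.
  rewrite -(eqP ck) /conjg invgK cM ?odd_permM ?odd_permV ?(negbTE eg) ?(negbTE ek) //.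
  rewrite cM ?odd_permM ?odd_permV ?(negbTE eg) ?(negbTE ek) //.
  by rewrite mulrCA cV // mulr1 eqxx.
have hs : simple 'Alt_('I_6) by apply: simple_Alt5; rewrite card_ord.
have /simpleP [_ /(_ KG nK) [K1|KA]] := hs.
  exfalso; move/negP: ab_ne; apply; rewrite eq_mulgV1.
  have : (a3 * b3 * (b3 * a3)^-1)%g \in KG.
    have ea := a3_even; have eb := b3_even.
    have eab : ~~ odd_perm (a3 * b3)%g by rewrite odd_permM (negbTE ea) (negbTE eb).
    have eba : ~~ odd_perm (b3 * a3)%g by rewrite odd_permM (negbTE ea) (negbTE eb).
    rewrite inE odd_permM odd_permV (negbTE eab) (negbTE eba) /=.
    rewrite cM ?odd_permV //.
    by have := cV _ eba; rewrite cM // [c b3 * _]mulrC -[c a3 * c b3]cM // => ->.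
  by rewrite K1 inE.
move=> s es x Hx; rewrite hc //.
have : s \in KG by rewrite KA Alt_even.
by rewrite inE => /andP[_ /eqP ->]; rewrite mul1r.
Qed.
End Main.
Section B.
Variable C : numClosedFieldType.
Local Notation "m # s" := [multinom m (s i) | i < 6] (at level 40, left associativity).

Lemma meval_msym (s : 'S_6) (p : {mpoly C[6]}) x : (msym s p).@[x] = p.@[permc s x].
Proof.
elim/mpolyind: p => [|c m p _ _ IH]; first by rewrite msym0 !meval0.
rewrite msymD msymZ !mevalD !mevalZ IH msymX !mevalX; congr (_ * _ + _).
rewrite (reindex_inj (@perm_inj _ s)); apply: eq_bigr => j _.
by rewrite mnmE permK.
Qed.

Lemma pigeon (m : 'X_{1..6}) : mdeg m = 4%N -> exists i j, i != j /\ m i = m j.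
Proof.
move=> dm.
have le4 : forall i, (m i < 5)%N.
  move=> i; have : (m i <= mdeg m)%N by rewrite mdegE (bigD1 i) //= leq_addr.
  by rewrite dm.
pose f := fun i => (inord (m i) : 'I_5).
have /injectivePn [i [j ij fij]] : ~~ injectiveb f.
  apply/injectiveP => inj; have := leq_card f inj; by rewrite !card_ord.
exists i, j; split => //.
by move: fij => /(congr1 val); rewrite /f /= !inordK.
Qed.

Lemma msym_sum (I : finType) (P : pred I) (G : I -> {mpoly C[6]}) s :
  msym s (\sum_(i | P i) G i) = \sum_(i | P i) msym s (G i).
Proof. by rewrite raddf_sum. Qed.
Lemma meval_sum (I : finType) (P : pred I) (G : I -> {mpoly C[6]}) x :
  (\sum_(i | P i) G i).@[x] = \sum_(i | P i) (G i).@[x].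
Proof. by rewrite raddf_sum. Qed.
Lemma mcoeff_sum (I : finType) (P : pred I) (G : I -> {mpoly C[6]}) m :
  (\sum_(i | P i) G i)@_m = \sum_(i | P i) (G i)@_m.
Proof. by rewrite raddf_sum. Qed.

Lemma partB (F : {mpoly C[6]}) (HF4 : F \is 4.-homog)
  (HA : forall s : 'S_6, ~~ odd_perm s -> forall x, in_hyp x -> F.@[permc s x] = F.@[x]) :
  exists P : {mpoly C[6]}, [/\ P \is symmetric, P \is 4.-homog &
     exists2 N : nat, (0 < N)%N & forall x, in_hyp x -> P.@[x] = F.@[x] *+ N].
Proof.
pose P := \sum_(s : 'S_6 | ~~ odd_perm s) msym s F.
have Pc : forall m, P@_m = \sum_(s : 'S_6 | ~~ odd_perm s) F@_(m # s).
  by move=> m; rewrite mcoeff_sum; apply: eq_bigr => s _; rewrite mcoeff_sym.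
have P0 : forall m, mdeg m != 4%N -> P@_m = 0.
  move=> m dm; rewrite Pc big1 // => s _.
  by apply: (dhomog_nemf_coeff HF4); move: dm; rewrite -(mdeg_mperm m s).
have Pinv : forall t : 'S_6, ~~ odd_perm t -> msym t P = P.
  move=> t et; rewrite msym_sum.
  rewrite [RHS](reindex_inj (mulIg t)) /=.
  apply: eq_big => s; first by rewrite odd_permM (negbTE et) addbF.
  by move=> _; rewrite msymMm.
exists P; split.
- apply/issymP => sg; apply/mpolyP => m; rewrite mcoeff_sym.
  have [dm|dm] := eqVneq (mdeg m) 4%N; last first.
    by rewrite !P0 // mdeg_mperm.
  case es : (odd_perm sg); last first.
    by rewrite -mcoeff_sym Pinv // es.
  have [i [j [ij mij]]] := pigeon dm.
  pose tau := tperm i j.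
  have mt : m # tau = m.
    by apply/mnmP => k; rewrite mnmE /tau; case: tpermP => // ->.
  have ee : ~~ odd_perm (sg * tau)%g by rewrite odd_permM odd_tperm ij es.
  have -> : sg = ((sg * tau) * tau)%g by rewrite -mulgA tperm2 mulg1.
  by rewrite mpermM mt -mcoeff_sym Pinv.
- apply/dhomogP => m; rewrite mcoeff_msupp; apply: contraNeq => /P0 ->.
  by rewrite eqxx.
exists #|[pred s : 'S_6 | ~~ odd_perm s]|.
  by apply/card_gt0P; exists 1%g; rewrite inE odd_perm1.
move=> x Hx; rewrite meval_sum.
rewrite (eq_bigr (fun _ => F.@[x])); last by move=> s es; rewrite meval_msym HA.
by rewrite sumr_const.
Qed.
End B.
Section C.
Variable C : numClosedFieldType.
Definition aM : 'X_{1..6} := (U_(i1) + U_(i1))%MM.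
Definition bM : 'X_{1..6} := U_(i3)%MM.

Lemma mnm6 (m m' : 'X_{1..6}) : m i0 = m' i0 -> m i1 = m' i1 -> m i2 = m' i2 ->
  m i3 = m' i3 -> m i4 = m' i4 -> m i5 = m' i5 -> m = m'.
Proof.
move=> h0 h1 h2 h3 h4 h5; apply/mnmP => -[[|[|[|[|[|[|k]]]]]] Hk];
  by rewrite ?(bool_irrelevance Hk isT).
Qed.

Lemma aMbM : (aM == bM) = false.
Proof. by apply/negP => /eqP/mnmP/(_ i1); rewrite !mnmDE !mnm1E. Qed.

Lemma mon_wgt4 (v : 'I_6 -> C) (m : 'X_{1..6}) : v i0 = 0 -> mnmwgt m = 4%N ->
  \prod_i v i ^+ m i = (m == aM)%:R * v i1 ^+ 2 + (m == bM)%:R * v i3.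
Proof.
move=> v0; rewrite /mnmwgt big6 /= => w.
rewrite big6 /= v0.
have [h0|h0] := posnP (m i0).
  have : (m i1 = 2 /\ m i2 = 0 /\ m i3 = 0 /\ m i4 = 0 /\ m i5 = 0)%N \/
         (m i1 = 0 /\ m i2 = 0 /\ m i3 = 1 /\ m i4 = 0 /\ m i5 = 0)%N by lia.
  case => [[h1 [h2 [h3 [h4 h5]]]] | [h1 [h2 [h3 [h4 h5]]]]].
    rewrite h0 h1 h2 h3 h4 h5 /=.
    have -> : m = aM by apply: mnm6; rewrite ?mnmDE ?mnm1E.
    rewrite eqxx aMbM.
    by rewrite !expr0 !mulr1 mul1r mul0r addr0 expr2.
  rewrite h0 h1 h2 h3 h4 h5 /=.
  have -> : m = bM by apply: mnm6; rewrite ?mnmDE ?mnm1E.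
  rewrite eqxx eq_sym aMbM.
  by rewrite !expr0 !mulr1 !mul1r mul0r add0r expr1.
have -> : (m == aM) = false.
  by apply/negP => /eqP/mnmP/(_ i0); rewrite mnmDE mnm1E => e; rewrite e in h0.
have -> : (m == bM) = false.
  by apply/negP => /eqP/mnmP/(_ i0); rewrite mnm1E => e; rewrite e in h0.
by rewrite expr0n gtn_eqF // !mul0r add0r.
Qed.
Lemma coef_sum (t : {mpoly C[6]}) a :
  \sum_(m <- msupp t) t@_m * (m == a)%:R = t@_a.
Proof.
rewrite [in RHS](mpolyE t); elim: (msupp t) => [|m s IH].
  by rewrite !big_nil mcoeff0.
by rewrite !big_cons mcoeffD mcoeffZ mcoeffX IH.
Qed.

Lemma partC (Q : {mpoly C[6]}) : Q \is symmetric -> Q \is 4.-homog ->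
  exists A B : C, forall x, in_hyp x ->
    Q.@[x] = A * (mesym 6 C 2).@[x] ^+ 2 + B * (mesym 6 C 4).@[x].
Proof.
move=> sQ hQ; have [t [tQ ht]] := sym_fundamental_homog sQ hQ.
exists t@_aM, t@_bM => x Hx.
rewrite -tQ comp_mpoly_meval.
set v := (fun i : 'I_6 => _); rewrite mevalE.
have v0 : v i0 = 0.
  rewrite /v tnth_mktuple mesym1E raddf_sum /=.
  rewrite (eq_bigr (fun i => x i)); last by move=> i _; rewrite mevalXU.
  exact: Hx.
have v1 : v i1 = (mesym 6 C 2).@[x] by rewrite /v tnth_mktuple.
have v3 : v i3 = (mesym 6 C 4).@[x] by rewrite /v tnth_mktuple.
rewrite (eq_big_seq (fun m => t@_m * ((m == aM)%:R * v i1 ^+ 2 + (m == bM)%:R * v i3))); last first.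
  move=> m mt; rewrite mon_wgt4 //; exact: (dhomog_mf ht mt).
rewrite (eq_bigr (fun m => (t@_m * (m == aM)%:R) * v i1 ^+ 2 + (t@_m * (m == bM)%:R) * v i3)); last first.
  by move=> m _; rewrite mulrDr !mulrA.
by rewrite big_split /= -!big_distrl /= !coef_sum v1 v3.
Qed.

Definition p4f (x : 'I_6 -> C) := \sum_(i < 6) x i ^+ 4.
Definition p2f (x : 'I_6 -> C) := \sum_(i < 6) x i ^+ 2.

Lemma msym_XU (s : 'S_6) (i : 'I_6) : msym s ('X_i : {mpoly C[6]}) = 'X_(s i).
Proof.
rewrite msymX; congr 'X_[_]; apply/mnmP => j; rewrite mnmE !mnm1E.
by rewrite (canF_eq (permK s)).
Qed.

Lemma powsum_sym k : (\sum_(i < 6) 'X_i ^+ k : {mpoly C[6]}) \is symmetric.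
Proof.
apply/issymP => s; rewrite raddf_sum /=.
rewrite (eq_bigr (fun i => 'X_(s i) ^+ k)); last by move=> i _; rewrite rmorphXn /= msym_XU.
by rewrite [RHS](reindex_inj (@perm_inj _ s)).
Qed.

Lemma X_homog1 (i : 'I_6) : ('X_i : {mpoly C[6]}) \is 1.-homog.
Proof. by rewrite dhomogX; apply/eqP; exact: mdeg1. Qed.

Lemma powsum_eval k x : (\sum_(i < 6) 'X_i ^+ k : {mpoly C[6]}).@[x] = \sum_(i < 6) x i ^+ k.
Proof. by rewrite raddf_sum; apply: eq_bigr => i _; rewrite /= rmorphXn /= mevalXU. Qed.

Lemma p4_struct : exists A B : C, forall x, in_hyp x ->
    p4f x = A * (mesym 6 C 2).@[x] ^+ 2 + B * (mesym 6 C 4).@[x].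
Proof.
have [A [B h]] := @partC (\sum_(i < 6) 'X_i ^+ 4) (powsum_sym 4)
  (rpred_sum _ (fun i _ => dhomogMn 4 (X_homog1 i))).
by exists A, B => x hx; rewrite -h // powsum_eval.
Qed.

Lemma p2_struct : exists A B : C, forall x, in_hyp x ->
    p2f x ^+ 2 = A * (mesym 6 C 2).@[x] ^+ 2 + B * (mesym 6 C 4).@[x].
Proof.
have hh : (\sum_(i < 6) 'X_i ^+ 2 : {mpoly C[6]}) \is 2.-homog.
  exact: (rpred_sum _ (fun i _ => dhomogMn 2 (X_homog1 i))).
have [A [B h]] := @partC ((\sum_(i < 6) 'X_i ^+ 2) ^+ 2) (rpredX 2 (powsum_sym 2))
  (dhomogMn 2 hh).
by exists A, B => x hx; rewrite -h // rmorphXn /=; congr (_ ^+ _); rewrite powsum_eval.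
Qed.

Definition ypt : 'I_6 -> C := fun i => if i == i0 then 1 else if i == i1 then -1 else 0.
Definition zpt : 'I_6 -> C := fun i => if i == i0 then 1 else if i == i1 then 1
   else if i == i2 then -1 else if i == i3 then -1 else 0.

Lemma combine (f E2 E4 : ('I_6 -> C) -> C) :
  (exists A B, forall x, in_hyp x -> f x = A * E2 x ^+ 2 + B * E4 x) ->
  (exists A B, forall x, in_hyp x -> p4f x = A * E2 x ^+ 2 + B * E4 x) ->
  (exists A B, forall x, in_hyp x -> p2f x ^+ 2 = A * E2 x ^+ 2 + B * E4 x) ->
  exists a b, forall x, in_hyp x -> f x = a * p4f x + b * p2f x ^+ 2.
Proof.
move=> [A [B hf]] [a1 [b1 h4]] [a2 [b2 h2]].
pose d := a1 * b2 - a2 * b1.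
have E2e : forall x, in_hyp x -> d * E2 x ^+ 2 = b2 * p4f x - b1 * p2f x ^+ 2.
  by move=> x hx; rewrite h4 // h2 // /d; ring.
have E4e : forall x, in_hyp x -> d * E4 x = a1 * p2f x ^+ 2 - a2 * p4f x.
  by move=> x hx; rewrite h4 // h2 // /d; ring.
have hy : in_hyp ypt by rewrite /in_hyp big6 /ypt /=; ring.
have hz : in_hyp zpt by rewrite /in_hyp big6 /zpt /=; ring.
have p4y : p4f ypt = 2%:R by rewrite /p4f big6 /ypt /=; ring.
have p2y : p2f ypt = 2%:R by rewrite /p2f big6 /ypt /=; ring.
have p4z : p4f zpt = 4%:R by rewrite /p4f big6 /zpt /=; ring.
have p2z : p2f zpt = 4%:R by rewrite /p2f big6 /zpt /=; ring.
have n8 : (8%:R : C) != 0 by rewrite pnatr_eq0.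
have n2 : (2%:R : C) != 0 by rewrite pnatr_eq0.
have dnz : d != 0.
  apply/eqP => d0.
  have ey := E2e _ hy; have ez := E2e _ hz; have ey' := E4e _ hy; have ez' := E4e _ hz.
  rewrite d0 !mul0r p4y p2y p4z p2z in ey ez ey' ez'.
  have b10 : b1 = 0.
    have : b1 * 8%:R = 0.
      by rewrite (_ : b1 * 8%:R = 2%:R * (b2 * 2%:R - b1 * 2%:R ^+ 2) - (b2 * 4%:R - b1 * 4%:R ^+ 2)); [rewrite -ey -ez; ring | ring].
    by move/eqP; rewrite mulf_eq0 (negbTE n8) orbF => /eqP.
  have b20 : b2 = 0.
    move: ey; rewrite b10 mul0r subr0 => /esym/eqP; rewrite mulf_eq0 (negbTE n2) orbF.
    by move/eqP.
  have a10 : a1 = 0.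
    have : a1 * 8%:R = 0.
      by rewrite (_ : a1 * 8%:R = (a1 * 4%:R ^+ 2 - a2 * 4%:R) - 2%:R * (a1 * 2%:R ^+ 2 - a2 * 2%:R)); [rewrite -ey' -ez'; ring | ring].
    by move/eqP; rewrite mulf_eq0 (negbTE n8) orbF => /eqP.
  have a20 : a2 = 0.
    move: ey'; rewrite a10 mul0r sub0r => /esym/eqP; rewrite oppr_eq0 mulf_eq0 (negbTE n2) orbF.
    by move/eqP.
  have := h4 _ hy; rewrite p4y a10 b10 !mul0r addr0 => /eqP.
  by rewrite (negbTE n2).
exists ((A * b2 - B * a2) / d), ((B * a1 - A * b1) / d) => x hx.
apply: (mulfI dnz); rewrite hf //.
rewrite (_ : d * (A * E2 x ^+ 2 + B * E4 x) = A * (d * E2 x ^+ 2) + B * (d * E4 x)); last by ring.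
rewrite E2e // E4e //.
by field.
Qed.
End C.
Lemma card_Alt6 : #|('Alt_('I_6))%g| = 360%N.
Proof. have := card_Alt (T := 'I_6); rewrite card_ord => /(_ isT) h. have e : 6`! = 720%N by []. rewrite e in h; lia. Qed.

Section Grp.
Local Open Scope group_scope.
Lemma five_dvd (H : {group 'S_6}) : (H \subset 'Alt_('I_6))%g -> (60 <= #|H|)%N -> (5 %| #|H|)%N.
Proof.
move=> sHG h60.
set G := ('Alt_('I_6))%G.
have cG : #|G| = 360%N := card_Alt6.
have LG := Lagrange sHG.
have hs : simple G by apply: simple_Alt5; rewrite card_ord.
have nC := gcore_normal sHG.
have /simpleP [_ /(_ _ nC) [C1|CG]] := hs; last first.
  have sGH : G \subset H by rewrite -CG gcore_sub.
  have -> : #|H| = #|G| by apply/eqP; rewrite eqn_leq (subset_leq_card sHG) (subset_leq_card sGH).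
  by rewrite cG.
pose R := rcosets H G.
pose phi := fun a : 'S_6 => restr_perm R (actperm 'Rs a).
have NR : forall a, a \in G -> actperm 'Rs a \in 'N(R | 'P).
  move=> a Ga; apply/astabsP => X /=; rewrite /aperm actpermE.
  by have /actsP := actsRs_rcosets H G; apply.
have phiE : forall a X, a \in G -> X \in R -> phi a X = (X :* a)%g.
  by move=> a X Ga XR; rewrite /phi restr_permE ?NR // actpermE /= rcosetE.
have inj : {in G &, injective phi}.
  move=> a b Ga Gb eab.
  have : (a * b^-1)%g \in 'C(R | 'Rs).
    apply/astabP => X XR /=.
    have := congr1 (fun p : {perm {set 'S_6}} => p X) eab.
    rewrite /= !phiE // => e.
    by rewrite rcosetE rcosetM e -rcosetM mulgV rcoset1.
  by rewrite astabRs_rcosets C1 inE -eq_mulgV1 => /eqP.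
have : (#|G| <= #|R|`!)%N.
  rewrite -(card_in_imset inj) -card_perm.
  apply: subset_leq_card; apply/subsetP => p /imsetP [a _ ->].
  exact: restr_perm_on.
have hR : #|R| = #|G : H| by [].
rewrite hR cG.
have LG' : (#|H| * #|G : H|)%N = 360%N by rewrite -cG; exact: LG.
have hn : (#|G : H| <= 6)%N by nia.
move: hn LG'.
case: #|G : H| => [|[|[|[|[|[|[|n]]]]]]] //= _ LG2 _.
by move: LG2 => /(congr1 (divn^~ 6%N)); rewrite mulnK //= => ->.
Qed.
End Grp.
Section Grp2.
Local Open Scope group_scope.
Lemma orb5 (g : 'S_6) : #[g] = 5%N ->
  exists a f, [/\ g f = f, forall k, (g ^+ k) a != f & forall i, i != f -> exists k, i = (g ^+ k) a].
Proof.
move=> og.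
have dv : forall x, (#|porbit g x| %| 5)%N.
  move=> x; have := dvdn_orbit 'P <[g]> x; rewrite -/(order g) og. by rewrite porbit.unlock.
have : [exists a, #|porbit g a| != 1%N].
  apply: contraT; rewrite negb_exists => /forallP h.
  have g1 : g = 1.
    apply/permP => x; rewrite perm1.
    have /cards1P [y py] := negPn (h x).
    have := porbit_id g x; have := mem_porbit g 1 x; rewrite py expg1 !inE.
    by move=> /eqP -> /eqP ->.
  by move: og; rewrite g1 order1.
case/existsP => a pa.
have c5 : #|porbit g a| = 5%N.
  move: (dv a) (card_porbit_neq0 g a) pa.
  case: #|porbit g a| => [|[|[|[|[|[|n]]]]]] //.
have c1 : #|~: porbit g a| = 1%N by have := cardsC (porbit g a); rewrite c5 card_ord; lia.
have /cards1P [f hf] : #|~: porbit g a| == 1%N by rewrite c1.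
have fP : f \notin porbit g a.
  have : f \in ~: porbit g a by rewrite hf set11.
  by rewrite inE.
have inP : forall i, i != f -> i \in porbit g a.
  move=> i; apply: contraR => ni.
  have : i \in ~: porbit g a by rewrite inE.
  by rewrite hf inE.
exists a, f; split.
- apply/eqP; apply: (contraR (inP (g f))).
  rewrite porbit_sym -[g f]/((g ^+ 1) f) porbit_perm porbit_sym.
  by [].
- by move=> k; apply: contraNneq fP => <-; exact: mem_porbit.
- by move=> i /inP /porbitP.
Qed.
End Grp2.

Lemma card_bigcup_leq (T I : finType) (F : I -> {set T}) :
  (#|\bigcup_i F i| <= \sum_i #|F i|)%N.
Proof.
apply: (big_ind2 (fun (A : {set T}) n => #|A| <= n)%N); first by rewrite cards0.
  by move=> A n B m hA hB; rewrite cardsU; apply: leq_trans (leq_subr _ _) (leq_add hA hB).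
by [].
Qed.

Section E.
Variable C : numClosedFieldType.
Implicit Types (u w x : 'I_6 -> C).

Definition rel6 u w : bool := [forall i, [forall j, u i * w j == u j * w i]].
Definition nzv u : bool := [exists i, u i != 0].

Lemma rel6_scal u w l : (forall i, w i = l * u i) -> rel6 u w.
Proof. move=> h; apply/forallP => i; apply/forallP => j; rewrite !h; apply/eqP; ring. Qed.

Lemma rel6P u w : nzv u -> rel6 u w -> exists l, forall i, w i = l * u i.
Proof.
case/existsP => k uk /forallP h; exists (w k / u k) => i.
have /forallP /(_ k) /eqP e := h i.
apply: (mulfI uk); rewrite -e; field.
by [].
Qed.

Lemma permc_nz x s : nzv x -> nzv (permc s x).
Proof. by case/existsP => k xk; apply/existsP; exists (s^-1 k)%g; rewrite /permc permKV. Qed.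

Lemma partE x0 : nzv x0 -> in_hyp x0 ->
  (exists ys : 'I_6 -> ('I_6 -> C), forall s : 'S_6, ~~ odd_perm s ->
      exists j, proj_eq (ys j) (permc s x0)) ->
  exists f : 'I_6, exists t : C, t != 0 /\ forall i, i != f -> x0 i = t.
Proof.
move=> nz hx [ys Hys].
pose St := [set s : 'S_6 | ~~ odd_perm s && rel6 x0 (permc s x0)].
have StP : forall s, s \in St -> exists l, forall i, x0 (s i) = l * x0 i.
  by move=> s; rewrite inE => /andP[_ r]; exact: rel6P nz r.
have gSt : group_set St.
  apply/group_setP; split.
    rewrite inE odd_perm1 /=; apply: (@rel6_scal _ _ 1) => i.
    by rewrite /permc perm1 mul1r.
  move=> s t Ss St'; have [ls hs] := StP s Ss; have [lt ht] := StP t St'.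
  move: Ss St'; rewrite !inE => /andP[es _] /andP[et _].
  rewrite odd_permM (negbTE es) (negbTE et) /=.
  by apply: (@rel6_scal _ _ (lt * ls)) => i; rewrite /permc permM ht hs mulrA.
pose StG := Group gSt.
have sStA : (StG \subset 'Alt_('I_6))%g.
  by apply/subsetP => s; rewrite inE Alt_even => /andP[].
have h60 : (60 <= #|StG|)%N.
  pose fib j := [set s : 'S_6 | ~~ odd_perm s && nzv (ys j) && rel6 (ys j) (permc s x0)].
  have cov : (('Alt_('I_6))%g \subset \bigcup_j fib j).
    apply/subsetP => s; rewrite Alt_even => es.
    have [j [l l0 e]] := Hys s es.
    apply/bigcupP; exists j => //; rewrite inE es /=.
    have nzj : nzv (ys j).
      have := permc_nz s nz; rewrite e; case/existsP => k.
      rewrite mulf_eq0 negb_or => /andP[_ yk]; by apply/existsP; exists k.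
    by rewrite nzj /=; apply: (@rel6_scal _ _ l) => i; rewrite e.
  have fibS : forall j, (#|fib j| <= #|StG|)%N.
    move=> j; case: (set_0Vmem (fib j)) => [->|[s0 Fs0]]; first by rewrite cards0.
    move: (Fs0); rewrite inE => /andP[/andP[e0 nzj] r0].
    have [l0 h0] := rel6P nzj r0.
    have l0nz : l0 != 0.
      apply/eqP => l00; have := permc_nz s0 nz; case/existsP => k.
      by rewrite h0 l00 mul0r eqxx.
    rewrite -(card_imset _ (mulgI s0^-1)%g).
    apply: subset_leq_card; apply/subsetP => _ /imsetP[s Fs ->].
    move: Fs; rewrite !inE => /andP[/andP[es _] rs].
    have [ls hs] := rel6P nzj rs.
    rewrite odd_permM odd_permV (negbTE e0) (negbTE es) /=.
    apply: (@rel6_scal _ _ (ls / l0)) => i; rewrite /permc permM.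
    have := hs (s0^-1 i)%g; rewrite /permc => ->.
    have := h0 (s0^-1 i)%g; rewrite /permc permKV => ->.
    by rewrite mulrA divfK.
  have h1 := leq_trans (subset_leq_card cov) (card_bigcup_leq fib).
  have h2 : (\sum_(j < 6) #|fib j| <= \sum_(j < 6) #|StG|)%N by apply: leq_sum => j _; exact: fibS.
  move: (leq_trans h1 h2); rewrite card_Alt6 sum_nat_const card_ord.
  lia.
have d5 := five_dvd sStA h60.
have [g Sg og] := Cauchy (isT : prime 5) d5.
have [l hl] := StP g Sg.
have hk : forall k i, x0 ((g ^+ k)%g i) = l ^+ k * x0 i.
  elim => [|k IH] i; first by rewrite expg0 perm1 expr0 mul1r.
  by rewrite expgSr permM hl IH exprS mulrA.
have [a [f [gf gkf orb]]] := orb5 og.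
have allz : x0 a = 0 -> x0 f = 0 -> False.
  move=> xa xf; have z : forall i, x0 i = 0.
    move=> i; case: (eqVneq i f) => [->//|/orb [k ->]].
    by rewrite hk xa mulr0.
  by case/existsP: nz => k; rewrite z eqxx.
have xfE : x0 f = - \sum_(i | i != f) x0 i.
  by move: hx; rewrite /in_hyp (bigD1 f) //= => /eqP; rewrite addr_eq0 => /eqP.
case: (eqVneq l 1) => [l1|ln1].
  have cst : forall i, i != f -> x0 i = x0 a.
    by move=> i /orb [k ->]; rewrite hk l1 expr1n mul1r.
  exists f, (x0 a); split => //.
  apply/negP => /eqP xa; apply: (allz xa).
  by rewrite xfE big1 ?oppr0 // => i /cst ->.
exfalso.
have xf0 : x0 f = 0.
  have e := hl f; rewrite gf in e.
  have : (1 - l) * x0 f = 0 by rewrite mulrBl mul1r -e subrr.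
  by move/eqP; rewrite mulf_eq0 subr_eq0 eq_sym (negbTE ln1) /= => /eqP.
have xa0 : x0 a != 0 by apply/negP => /eqP xa; exact: allz xa xf0.
have l5 : l ^+ 5 = 1.
  have := hk #[g]%g a; rewrite expg_order perm1 og => e.
  by apply: (mulIf xa0); rewrite -e mul1r.
have lnz : l != 0 by apply/negP => /eqP l0; move: l5; rewrite l0 expr0n /= => /eqP; rewrite eq_sym oner_eq0.
have prim : 5.-primitive_root l.
  have [m pm dm] := prim_order_exists (isT : (0 < 5)%N) l5.
  move: pm dm; case: m => [|[|[|[|[|[|m]]]]]] //.
  by move=> /prim_expr_order; rewrite expr1 => l1; move: ln1; rewrite l1 eqxx.
have nzo : forall i, i != f -> x0 i != 0.
  by move=> i /orb [k ->]; rewrite hk mulf_neq0 // expf_neq0.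
have inj : injective x0.
  move=> i j eij; apply/eqP; apply: contraT => ij.
  case: (eqVneq i f) => [if_|inf]; case: (eqVneq j f) => [jf|jnf].
  - by rewrite if_ jf eqxx in ij.
  - by move: (nzo j jnf); rewrite -eij if_ xf0 eqxx.
  - by move: (nzo i inf); rewrite eij jf xf0 eqxx.
  have [k ik] := orb i inf; have [k' jk] := orb j jnf.
  move: eij; rewrite ik jk !hk => /(mulIf xa0) /eqP; rewrite (eq_prim_root_expr prim) => /eqP ekk.
  move: ij; rewrite ik jk -(expg_mod_order g k) -(expg_mod_order g k') og ekk.
  by rewrite eqxx.
have : (#|StG| <= 6)%N.
  have ij : {in StG &, injective (fun s : 'S_6 => s a)}.
    move=> s t Ss St' e /=.
    have [ls hs] := StP s Ss; have [lt ht] := StP t St'.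
    have lst : ls = lt by apply: (mulIf xa0); rewrite -hs -ht e.
    by apply/permP => i; apply: inj; rewrite hs ht lst.
  by rewrite -(card_in_imset ij); apply: (leq_trans (max_card _)); rewrite card_ord.
lia.
Qed.
End E.

Lemma sum_special (C : numClosedFieldType) (x0 : 'I_6 -> C) f0 t (g : C -> C) :
  (forall i, i != f0 -> x0 i = t) -> \sum_(i < 6) g (x0 i) = g (x0 f0) + g t *+ 5.
Proof.
move=> ht; rewrite (bigD1 f0) //=; congr (_ + _).
rewrite (eq_bigr (fun _ => g t)); last by move=> i /ht ->.
by rewrite sumr_const cardC1 card_ord.
Qed.

Theorem lemma4p9 (C : numClosedFieldType) (F : {mpoly C[6]})
  (HF4 : F \is 4.-homog)
  (HFnz : exists2 x : 'I_6 -> C, in_hyp x & F.@[x] != 0)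
  (Hinv : forall s : 'S_6, ~~ odd_perm s ->
            exists c : C, forall x : 'I_6 -> C, in_hyp x ->
              F.@[permc s x] = c * F.@[x])
  (Horb : exists x0 : 'I_6 -> C,
      [/\ (exists i, x0 i != 0), in_hyp x0,
          (forall s : 'S_6, ~~ odd_perm s -> F.@[permc s x0] = 0) &
          exists ys : 'I_6 -> ('I_6 -> C),
            forall s : 'S_6, ~~ odd_perm s ->
              exists j : 'I_6, proj_eq (ys j) (permc s x0)]) :
  exists c : C, forall x : 'I_6 -> C, in_hyp x ->
    F.@[x] = c * Xt_form (7%:R / 10%:R) x.
Proof.
have HA := partA HFnz Hinv.
have [P [sP hP [N N0 PE]]] := partB HF4 HA.
have [A [B hPs]] := partC sP hP.
have Nnz : (N%:R : C) != 0 by rewrite pnatr_eq0 -lt0n.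
have fstruct : exists A B : C, forall x, in_hyp x ->
    F.@[x] = A * (mesym 6 C 2).@[x] ^+ 2 + B * (mesym 6 C 4).@[x].
  exists (A / N%:R), (B / N%:R) => x hx.
  apply: (mulfI Nnz); have := PE x hx; rewrite hPs // -mulr_natl => <-.
  by field.
have [a [b hab]] := @combine C (fun x => F.@[x]) (fun x => (mesym 6 C 2).@[x])
  (fun x => (mesym 6 C 4).@[x]) fstruct (@p4_struct C) (@p2_struct C).
have [x0 [nz0 hx0 F0 [ys Hys]]] := Horb.
have nzv0 : nzv x0 by case: nz0 => i hi; apply/existsP; exists i.
have [f0 [t [tnz ht]]] := partE nzv0 hx0 (ex_intro _ ys Hys).
have xf : x0 f0 = - (t *+ 5).
  have := hx0; rewrite /in_hyp (sum_special id ht) /= => /eqP.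
  by rewrite addr_eq0 => /eqP.
have F00 : F.@[x0] = 0.
  rewrite -(F0 1%g) ?odd_perm1 //; apply: meval_eq => i.
  by rewrite /permc perm1.
have e := hab x0 hx0; rewrite /= F00 /p4f /p2f in e.
rewrite (sum_special (fun y => y ^+ 4) ht) (sum_special (fun y => y ^+ 2) ht) /= xf in e.
have e2 : (630%:R * a + 900%:R * b) * t ^+ 4 = 0 by rewrite e; ring.
move: e2 => /eqP; rewrite mulf_eq0 expf_eq0 (negbTE tnz) andbF orbF => /eqP e3.
have n900 : (900%:R : C) != 0 by rewrite pnatr_eq0.
have n10 : (10%:R : C) != 0 by rewrite pnatr_eq0.
have hb : b = - (7%:R / 10%:R) * a.
  have h9 : 900%:R * b = - (630%:R * a).
    by apply/eqP; rewrite -addr_eq0 addrC; apply/eqP.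
  apply: (mulfI n900); rewrite h9; field.
  by [].
exists a => x hx; rewrite hab // hb /Xt_form /p4f /p2f; ring.
Qed.
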